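(* Let $N\ge3$ be an integer and consider the equation $$-w''+(N-2)w'+(N-1)w=\frac{1}{3}\binom{N-1}{2}w^3 .$$ Then: (D) the only $w\in C^2([0,\infty))$ solving it on $[0,\infty)$ with $w(0)=0$ and $\lim_{t\to\infty}w(t)=0$ is $w\equiv0$; (Nav) the only $w\in C^2([0,\infty))$ solving it on $[0,\infty)$ with $w'(0)-(N-1)w(0)=0$ and $\lim_{t\to\infty}w(t)=0$ is $w\equiv0$; (E) the only $w\in C^2(\mathbb{R})$ solving it on $\mathbb{R}$ with $\lim_{t\to\pm\infty}w(t)=0$ is $w\equiv0$.
   Context: These are the radial Dirichlet, Navier and entire problems for $\Delta^2u=-S_3[u]$ ($S_3$ the third elementary symmetric polynomial of the Hessian eigenvalues), i.e. $k=3$, $\lambda=0$, obtained via $v=u'$, $w(t)=-v(e^{-t})$. *)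

(* Defs.v *)
From Stdlib Require Import Reals.
From Coquelicot Require Import Coquelicot.
Open Scope R_scope.

Definition ode (N : nat) (w w1 w2 : R -> R) (t : R) : Prop :=
  - w2 t + (INR N - 2) * w1 t + (INR N - 1) * w t
  = / 3 * Binomial.C (N - 1) 2 * (w t) ^ 3.

(* w is C^2 on [0,+oo) with first derivative w1 and second derivative w2:
   classical derivatives on (0,+oo), and w, w1, w2 continuous on [0,+oo)
   (right-continuous at 0).  This is the usual meaning of C^2([0,oo)):
   derivatives extend continuously to the boundary point 0 (equivalently,
   one-sided derivatives exist there and are given by w1 0, w2 0). *)
Definition C2_halfline (w w1 w2 : R -> R) : Prop :=
  (forall t, 0 < t -> is_derive w t (w1 t) /\ is_derive w1 t (w2 t)
                      /\ continuous w2 t) /\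
  filterlim w (at_right 0) (locally (w 0)) /\
  filterlim w1 (at_right 0) (locally (w1 0)) /\
  filterlim w2 (at_right 0) (locally (w2 0)).

Definition C2_line (w w1 w2 : R -> R) : Prop :=
  forall t, is_derive w t (w1 t) /\ is_derive w1 t (w2 t) /\ continuous w2 t.

(* Main.v *)
Require Import Defs.
From Stdlib Require Import Reals Lra.
From Coquelicot Require Import Coquelicot.
Open Scope R_scope.
Definition cN (N:nat) := / 3 * Binomial.C (N - 1) 2.
Definition En (N:nat) (w w1 : R -> R) t :=
  w1 t ^2 / 2 - (INR N - 1)/2 * w t ^2 + cN N / 4 * w t ^4.
Lemma E_derive N w w1 w2 t : is_derive w t (w1 t) -> is_derive w1 t (w2 t) ->
  ode N w w1 w2 t -> is_derive (En N w w1) t ((INR N - 2) * w1 t ^ 2).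
Proof.
intros H1 H2 Ho. unfold ode in Ho. fold (cN N) in Ho. unfold En.
auto_derive.
- repeat split; eexists; eauto.
- replace (Derive (fun x => w1 x) t) with (w2 t) by (symmetry; apply is_derive_unique; exact H2).
  replace (Derive (fun x => w x) t) with (w1 t) by (symmetry; apply is_derive_unique; exact H1). simpl in *. nra.
Qed.

Lemma cN_pos N : 0 <= cN N.
Proof.
unfold cN, Binomial.C. apply Rmult_le_pos. lra.
apply Rmult_le_pos. apply pos_INR.
apply Rlt_le, Rinv_0_lt_compat, Rmult_lt_0_compat; apply INR_fact_lt_0.
Qed.

Lemma INR3 N : (3 <= N)%nat -> 3 <= INR N.
Proof. intros H. apply le_INR in H. simpl in H. lra. Qed.

Definition Hyp N (w w1 w2 : R -> R) T0 := forall x, T0 < x ->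
  is_derive w x (w1 x) /\ is_derive w1 x (w2 x) /\ ode N w w1 w2 x.

Lemma der_cont (f df : R -> R) x : is_derive f x (df x) -> continuity_pt f x.
Proof. intros H. apply continuity_pt_filterlim. apply (ex_derive_continuous (V:=R_NormedModule)). eexists; eauto. Qed.

Lemma E_mono N w w1 w2 T0 : (3 <= N)%nat -> Hyp N w w1 w2 T0 ->
  forall s t, T0 < s -> s <= t -> En N w w1 s <= En N w w1 t.
Proof.
intros HN H s t Hs Hst. destruct (Req_dec s t) as [->|Hne]; [lra|].
destruct (MVT_gen (En N w w1) s t (fun x => (INR N - 2) * w1 x ^ 2)) as [c [Hc Heq]].
- intros x Hx. rewrite Rmin_left in Hx by lra. rewrite Rmax_right in Hx by lra.
  destruct (H x ltac:(lra)) as [A [B C]]. eapply E_derive; eauto.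
- intros x Hx. rewrite Rmin_left in Hx by lra. rewrite Rmax_right in Hx by lra.
  destruct (H x ltac:(lra)) as [A [B C]]. apply (der_cont _ (fun x => (INR N - 2) * w1 x ^ 2)). eapply E_derive; eauto.
- rewrite Rmin_left in Hc by lra. rewrite Rmax_right in Hc by lra.
  pose proof (INR3 N HN). assert (0 <= w1 c ^ 2) by nra.
  assert (0 <= (INR N - 2) * w1 c ^ 2 * (t - s)) by (apply Rmult_le_pos; [apply Rmult_le_pos|]; lra). lra.
Qed.

Definition Fp N x := - ((INR N - 1)/2 * x ^2) + cN N / 4 * x ^4.

Lemma En_F N w w1 t : En N w w1 t = w1 t ^ 2 / 2 + Fp N (w t).
Proof. unfold En, Fp. ring. Qed.

Lemma F_lim N w x : is_lim w x 0 -> is_lim (fun s => Fp N (w s)) x 0.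
Proof.
intros H. assert (E0 : Fp N 0 = 0) by (unfold Fp; ring). rewrite <- E0.
apply (is_lim_comp_continuous w (Fp N)); auto. apply (ex_derive_continuous (V:=R_NormedModule)). unfold Fp. auto_derive. auto.
Qed.

Lemma E_up N w w1 w2 T0 : (3 <= N)%nat -> Hyp N w w1 w2 T0 -> is_lim w p_infty 0 ->
  forall t, T0 < t -> En N w w1 t <= 0.
Proof.
intros HN H Hl t Ht. destruct (Rle_dec (En N w w1 t) 0) as [|Hd]; [auto|exfalso].
set (d := En N w w1 t). assert (Hd0 : 0 < d) by (unfold d; lra).
pose proof (F_lim N w _ Hl) as HF.
apply is_lim_spec in HF. destruct (HF (mkposreal (d/2) ltac:(lra))) as [M1 HM1].
apply is_lim_spec in Hl. destruct (Hl (mkposreal 1 ltac:(lra))) as [M2 HM2].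
simpl in HM1, HM2.
set (T := Rmax t (Rmax M1 M2) + 1).
assert (HT1 : t < T) by (unfold T; pose proof (Rmax_l t (Rmax M1 M2)); lra).
assert (HT2 : M1 < T) by (unfold T; pose proof (Rmax_r t (Rmax M1 M2)); pose proof (Rmax_l M1 M2); lra).
assert (HT3 : M2 < T) by (unfold T; pose proof (Rmax_r t (Rmax M1 M2)); pose proof (Rmax_r M1 M2); lra).
assert (Hbig : forall s, T <= s -> d < w1 s ^ 2).
{ intros s Hs. pose proof (E_mono N w w1 w2 T0 HN H t s Ht ltac:(lra)) as E.
  fold d in E. rewrite En_F in E. specialize (HM1 s ltac:(lra)).
  rewrite Rminus_0_r in HM1. apply Rabs_def2 in HM1. lra. }
set (k := Rmin 1 d). assert (Hk : 0 < k) by (unfold k; apply Rmin_glb_lt; lra).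
assert (Hk1 : k <= 1) by apply Rmin_l. assert (Hkd : k <= d) by apply Rmin_r.
set (K := 3 / k). assert (HK : 0 < K) by (unfold K; apply Rdiv_lt_0_compat; lra).
destruct (MVT_gen w T (T + K) w1) as [c [Hc Heq]].
- intros x Hx. rewrite Rmin_left in Hx by lra. rewrite Rmax_right in Hx by lra.
  apply (H x). lra.
- intros x Hx. rewrite Rmin_left in Hx by lra. rewrite Rmax_right in Hx by lra.
  eapply der_cont, (H x). lra.
- rewrite Rmin_left in Hc by lra. rewrite Rmax_right in Hc by lra.
  specialize (Hbig c ltac:(lra)).
  assert (Hc1 : k <= Rabs (w1 c)).
  { destruct (Rle_dec k (Rabs (w1 c))) as [|Hn]; auto. exfalso.
    rewrite <- pow2_abs in Hbig. pose proof (Rabs_pos (w1 c)). nra. }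
  assert (Hkk : k * K = 3) by (unfold K; field; lra).
  assert (E1 : Rabs (w (T + K) - w T) = Rabs (w1 c) * K).
  { rewrite Heq. replace (T + K - T) with K by ring. rewrite Rabs_mult, (Rabs_right K); lra. }
  pose proof (HM2 (T+K) ltac:(lra)) as A. pose proof (HM2 T ltac:(lra)) as B.
  rewrite Rminus_0_r in A, B.
  pose proof (Rabs_triang (w (T+K)) (- w T)). rewrite Rabs_Ropp in H0.
  assert (3 <= Rabs (w1 c) * K) by (rewrite <- Hkk; apply Rmult_le_compat_r; [lra|exact Hc1]). unfold Rminus in E1. lra.
Qed.

Lemma E_low N w w1 w2 : (3 <= N)%nat -> (forall T0, Hyp N w w1 w2 T0) -> is_lim w m_infty 0 ->
  forall t, 0 <= En N w w1 t.
Proof.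
intros HN H Hl t. destruct (Rle_dec 0 (En N w w1 t)) as [|Hd]; [auto|exfalso].
pose proof (F_lim N w _ Hl) as HF.
apply is_lim_spec in HF. destruct (HF (mkposreal (- En N w w1 t) ltac:(lra))) as [M HM].
simpl in HM. set (s := Rmin M t - 1).
assert (s < M) by (unfold s; pose proof (Rmin_l M t); lra).
assert (s < t) by (unfold s; pose proof (Rmin_r M t); lra).
pose proof (E_mono N w w1 w2 (s - 1) HN (H _) s t ltac:(lra) ltac:(lra)) as E.
pose proof (En_F N w w1 s). specialize (HM s ltac:(lra)). rewrite Rminus_0_r in HM.
apply Rabs_def2 in HM. assert (0 <= w1 s ^ 2) by nra. lra.
Qed.

Lemma zero_const N w w1 w2 T0 : (3 <= N)%nat -> Hyp N w w1 w2 T0 ->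
  (forall t, T0 < t -> En N w w1 t = 0) -> is_lim w p_infty 0 ->
  forall t, T0 < t -> w t = 0.
Proof.
intros HN H HE Hl.
assert (Hw1 : forall x, T0 < x -> w1 x = 0).
{ intros x Hx. destruct (H x Hx) as [A [B C]].
  pose proof (E_derive N w w1 w2 x A B C) as D.
  assert (D2 : is_derive (fun _ : R => 0) x ((INR N - 2) * w1 x ^ 2)).
  { apply (is_derive_ext_loc (En N w w1)); auto.
    exists (mkposreal (x - T0) ltac:(lra)). intros y Hy. apply HE.
    unfold ball in Hy; simpl in Hy; unfold AbsRing_ball, abs, minus, plus, opp in Hy; simpl in Hy.
    apply Rabs_def2 in Hy. lra. }
  apply is_derive_unique in D2. rewrite Derive_const in D2.
  pose proof (INR3 N HN). assert (w1 x ^ 2 = 0) by nra. nra. }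
intros t Ht. destruct (Req_dec (w t) 0) as [|Hn]; auto. exfalso.
apply is_lim_spec in Hl. destruct (Hl (mkposreal (Rabs (w t)) ltac:(apply Rabs_pos_lt; auto))) as [M HM].
simpl in HM. set (s := Rmax t M + 1).
assert (t < s) by (unfold s; pose proof (Rmax_l t M); lra).
assert (M < s) by (unfold s; pose proof (Rmax_r t M); lra).
destruct (MVT_gen w t s w1) as [c [Hc Heq]].
- intros x Hx. rewrite Rmin_left in Hx by lra. rewrite Rmax_right in Hx by lra.
  apply (H x). lra.
- intros x Hx. rewrite Rmin_left in Hx by lra. rewrite Rmax_right in Hx by lra.
  eapply der_cont, (H x). lra.
- rewrite Rmin_left in Hc by lra. rewrite Rmax_right in Hc by lra.
  rewrite (Hw1 c ltac:(lra)) in Heq. specialize (HM s ltac:(lra)).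
  rewrite Rminus_0_r in HM. replace (w s) with (w t) in HM by lra. lra.
Qed.

Lemma rlim_le (f : R -> R) l B d : 0 < d -> filterlim f (at_right 0) (locally l) ->
  (forall s, 0 < s < d -> f s <= B) -> l <= B.
Proof.
intros Hd H Hb. destruct (Rle_dec l B) as [|Hn]; auto. exfalso.
assert (Hloc : locally l (fun y => B < y)).
{ exists (mkposreal (l - B) ltac:(lra)). intros y Hy.
  unfold ball in Hy; simpl in Hy; unfold AbsRing_ball, abs, minus, plus, opp in Hy; simpl in Hy.
  apply Rabs_def2 in Hy. lra. }
destruct (H _ Hloc) as [eps He].
set (y := Rmin (eps / 2) (d/2)). assert (0 < y) by (unfold y; destruct eps; simpl; apply Rmin_glb_lt; lra).
assert (y <= eps/2) by apply Rmin_l. assert (y <= d/2) by apply Rmin_r.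
assert (ball 0 eps y).
{ unfold ball; simpl; unfold AbsRing_ball, abs, minus, plus, opp; simpl.
  rewrite Ropp_0, Rplus_0_r, Rabs_right by lra. destruct eps; simpl in *; lra. }
specialize (He y H3 H0). specialize (Hb y ltac:(lra)). simpl in He. lra.
Qed.

Lemma rlim_ge (f : R -> R) l B : filterlim f (at_right 0) (locally l) ->
  (forall s, 0 < s -> B <= f s) -> B <= l.
Proof.
intros H Hb. destruct (Rle_dec B l) as [|Hn]; auto. exfalso.
assert (Hloc : locally l (fun y => y < B)).
{ exists (mkposreal (B - l) ltac:(lra)). intros y Hy.
  unfold ball in Hy; simpl in Hy; unfold AbsRing_ball, abs, minus, plus, opp in Hy; simpl in Hy.
  apply Rabs_def2 in Hy. lra. }
destruct (H _ Hloc) as [eps He].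
set (y := eps / 2). assert (0 < y) by (unfold y; destruct eps; simpl; lra).
assert (ball 0 eps y).
{ unfold ball; simpl; unfold AbsRing_ball, abs, minus, plus, opp; simpl.
  rewrite Ropp_0, Rplus_0_r, Rabs_right by lra. unfold y; destruct eps; simpl; lra. }
specialize (He y H1 H0). specialize (Hb y H0). simpl in He. lra.
Qed.

Lemma En_rlim N w w1 : filterlim w (at_right 0) (locally (w 0)) ->
  filterlim w1 (at_right 0) (locally (w1 0)) ->
  filterlim (En N w w1) (at_right 0) (locally (En N w w1 0)).
Proof.
intros H0 H1.
apply (filterlim_ext (fun s => (fun y => y ^ 2 / 2) (w1 s) + Fp N (w s))).
{ intros s. rewrite En_F. reflexivity. }
rewrite En_F.
eapply (filterlim_comp_2 (fun s => (fun y => y ^ 2 / 2) (w1 s)) (fun s => Fp N (w s)) Rplus).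
- apply (filterlim_comp _ _ _ w1 (fun y => y ^ 2 / 2) _ _ _ H1).
  apply (ex_derive_continuous (V:=R_NormedModule) (fun y => y ^ 2 / 2)). auto_derive. auto.
- apply (filterlim_comp _ _ _ w (Fp N) _ _ _ H0).
  apply (ex_derive_continuous (V:=R_NormedModule) (Fp N)). unfold Fp. auto_derive. auto.
- apply (filterlim_plus (V:=R_NormedModule)).
Qed.

Lemma half N w w1 w2 : (3 <= N)%nat -> C2_halfline w w1 w2 ->
  (forall t, 0 <= t -> ode N w w1 w2 t) -> 0 <= En N w w1 0 ->
  is_lim w p_infty 0 -> forall t, 0 <= t -> w t = 0.
Proof.
intros HN [HC [Hr0 [Hr1 Hr2]]] Ho HE0 Hl.
assert (H : Hyp N w w1 w2 0).
{ intros x Hx. destruct (HC x Hx) as [A [B _]]. split; [exact A|split; [exact B|apply Ho; lra]]. }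
assert (Hpos : forall t, 0 < t -> w t = 0).
{ apply (zero_const N w w1 w2 0 HN H); auto.
  intros t Ht. apply Rle_antisym.
  - apply (E_up N w w1 w2 0 HN H Hl t Ht).
  - apply Rle_trans with (En N w w1 0); auto.
    apply (rlim_le (En N w w1) _ _ t Ht (En_rlim N w w1 Hr0 Hr1)).
    intros s Hs. apply (E_mono N w w1 w2 0 HN H); lra. }
intros t Ht. destruct (Rle_lt_or_eq_dec 0 t Ht) as [Hlt|<-]; auto.
apply Rle_antisym.
- apply (rlim_le w _ _ 1 ltac:(lra) Hr0). intros s Hs. rewrite Hpos; lra.
- apply (rlim_ge w _ _ Hr0). intros s Hs. rewrite Hpos; lra.
Qed.

Theorem theorem5p1 (N : nat) (HN : (3 <= N)%nat) :
  (* (D) Dirichlet problem on [0,oo) *)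
  (forall w w1 w2 : R -> R,
     C2_halfline w w1 w2 ->
     (forall t, 0 <= t -> ode N w w1 w2 t) ->
     w 0 = 0 ->
     is_lim w p_infty 0 ->
     forall t, 0 <= t -> w t = 0) /\
  (* (Nav) Navier problem on [0,oo) *)
  (forall w w1 w2 : R -> R,
     C2_halfline w w1 w2 ->
     (forall t, 0 <= t -> ode N w w1 w2 t) ->
     w1 0 - (INR N - 1) * w 0 = 0 ->
     is_lim w p_infty 0 ->
     forall t, 0 <= t -> w t = 0) /\
  (* (E) entire problem on R *)
  (forall w w1 w2 : R -> R,
     C2_line w w1 w2 ->
     (forall t, ode N w w1 w2 t) ->
     is_lim w p_infty 0 ->
     is_lim w m_infty 0 ->
     forall t, w t = 0).
Proof.
split; [|split].
- intros w w1 w2 HC Ho H0 Hl. apply (half N w w1 w2 HN HC Ho); auto.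
  unfold En. rewrite H0. assert (0 <= w1 0 ^ 2) by nra. lra.
- intros w w1 w2 HC Ho H0 Hl. apply (half N w w1 w2 HN HC Ho); auto.
  unfold En. replace (w1 0) with ((INR N - 1) * w 0) by lra.
  pose proof (INR3 N HN). pose proof (cN_pos N).
  assert (0 <= w 0 ^ 2) by nra. assert (0 <= w 0 ^ 4) by nra.
  assert (0 <= cN N * w 0 ^ 4) by nra.
  assert (0 <= (INR N - 1) * (INR N - 2) * w 0 ^ 2).
  { apply Rmult_le_pos; [apply Rmult_le_pos|]; lra. }
  nra.
- intros w w1 w2 HC Ho Hp Hm t.
  assert (H : forall T0, Hyp N w w1 w2 T0).
  { intros T0 x _. destruct (HC x) as [A [B _]]. auto. }
  apply (zero_const N w w1 w2 (t - 1) HN (H _)); auto; [|lra].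
  intros s Hs. apply Rle_antisym.
  + apply (E_up N w w1 w2 (t - 1) HN (H _) Hp s Hs).
  + apply (E_low N w w1 w2 HN H Hm).
Qed.
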